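(* Let $G=(V,E)$ be a finite connected graph with $n=|V|\ge2$ vertices such that the equation $DK=n\mathbf{1}_n$ admits at least one solution $K\in\mathbb{R}^n$. Then the following are equivalent: (a) $G$ is antipodal; (b) $G$ is self-centered and Bonnet–Myers sharp.
   Context: All graphs are finite, simple, connected and undirected, with the combinatorial shortest-path distance $d$. For $V=\{v_1,\dots,v_n\}$, $D=(d(v_i,v_j))_{i,j=1}^n$ is the distance matrix and $\mathbf{1}_n$ the all-ones column vector. When $DK=n\mathbf{1}_n$ has solutions, the Steinerberger curvature is a solution $K$ for which $\min_iK_i$ is maximal among all solutions (the unique solution if there is only one). $G$ is Bonnet–Myers sharp if $DK=n\mathbf{1}_n$ has a solution and its Steinerberger curvature $K$ satisfies $\min_iK_i=2/\mathrm{diam}(G)$ (equivalently, some solution $K$ has $\min_i K_i=2/\mathrm{diam}(G)$). $G$ is self-centered if for every $x\in V$ there exists $\hat x\in V$ with $d(x,\hat x)=\mathrm{diam}(G)$. For $x,y\in V$ let $[x,y]=\{z\in V: d(x,y)=d(x,z)+d(z,y)\}$; $G$ is antipodal if for every $x\in V$ there exists $\hat x\in V$ with $[x,\hat x]=V$. *)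

(* Defs.v *)
From HB Require Import structures.
From mathcomp Require Import all_boot all_order all_algebra.
From mathcomp Require Import reals.
Set Implicit Arguments. Unset Strict Implicit. Unset Printing Implicit Defensive.
Import Order.TTheory GRing.Theory Num.Theory.
Local Open Scope ring_scope.

Definition simple_graph (T : finType) (e : rel T) : Prop :=
  symmetric e /\ irreflexive e.

Definition graph_connected (T : finType) (e : rel T) : Prop :=
  forall x y : T, connect e x y.

Definition walk_k (T : finType) (e : rel T) (k : nat) (x y : T) : bool :=
  [exists p : k.-tuple T, path e x p && (last x p == y)].

(* combinatorial shortest-path distance: least k admitting a walk of length
   k from x to y (for connected graphs it is always < #|T|). *)
Definition gdist (T : finType) (e : rel T) (x y : T) : nat :=
  find (fun k => walk_k e k x y) (iota 0 #|T|).

Definition diam (T : finType) (e : rel T) : nat :=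
  (\max_(x : T) \max_(y : T) gdist e x y)%N.

Definition curv_solution (R : realType) (T : finType) (e : rel T)
    (K : T -> R) : Prop :=
  forall i : T, (\sum_(j : T) (gdist e i j)%:R * K j) = (#|T|)%:R.

Definition minv (R : realType) (T : finType) (K : T -> R) : R :=
  match enum T with
  | [::] => 0
  | x :: _ => \big[Num.min/K x]_(i : T) K i
  end.

Definition steinerberger_curvature (R : realType) (T : finType) (e : rel T)
    (K : T -> R) : Prop :=
  curv_solution e K /\
  forall K' : T -> R, curv_solution e K' -> minv K' <= minv K.

Definition bonnet_myers_sharp (R : realType) (T : finType) (e : rel T) : Prop :=
  exists K : T -> R, steinerberger_curvature e K /\
    minv K = 2 / (diam e)%:R.

Definition self_centered (T : finType) (e : rel T) : Prop :=
  forall x : T, exists xh : T, gdist e x xh = diam e.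

Definition ginterval (T : finType) (e : rel T) (x y : T) : {set T} :=
  [set z | (gdist e x y == gdist e x z + gdist e z y)%N].

Definition antipodal (T : finType) (e : rel T) : Prop :=
  forall x : T, exists xh : T, ginterval e x xh = [set: T].

(* Main.v *)
Require Import Defs.
From HB Require Import structures.
From mathcomp Require Import all_boot all_order all_algebra.
From mathcomp Require Import reals.
From mathcomp Require Import lra zify.
Import Order.TTheory GRing.Theory Num.Theory.
Local Open Scope ring_scope.
Set Implicit Arguments. Unset Strict Implicit.

Lemma walk_kP (T : finType) (e : rel T) k x y :
  reflect (exists p : seq T, [/\ size p = k, path e x p & last x p = y])
          (walk_k e k x y).
Proof.
apply: (iffP existsP) => [[p /andP[hp /eqP hl]]|[p [hs hp hl]]].
  by exists (val p); rewrite size_tuple.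
have hs' : size p == k by rewrite hs.
by exists (Tuple hs'); rewrite /= hp hl eqxx.
Qed.

Lemma walk_min (T : finType) (e : rel T) k x y :
  walk_k e k x y -> (k < #|T|)%N -> (gdist e x y <= k)%N.
Proof.
move=> hw hk; rewrite /gdist; case: leqP => // hlt.
by have := before_find 0 hlt; rewrite nth_iota // add0n hw.
Qed.

Lemma gdist_walk (T : finType) (e : rel T) x y :
  graph_connected e -> walk_k e (gdist e x y) x y /\ (gdist e x y < #|T|)%N.
Proof.
move=> hc; have := hc x y => /connectP [p hp ->].
case: (shortenP hp) => p' hp' hu _.
have hs : (size p' < #|T|)%N.
  move/card_uniqP: hu => /= <-; exact: max_card.
have hw : walk_k e (size p') x (last x p') by apply/walk_kP; exists p'.
have hh : has (fun k => walk_k e k x (last x p')) (iota 0 #|T|).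
  by apply/hasP; exists (size p'); rewrite // mem_iota.
move: (hh); rewrite has_find size_iota => hf; split => //.
by have := nth_find 0 hh; rewrite nth_iota // add0n.
Qed.

Lemma walk_sym (T : finType) (e : rel T) k x y :
  symmetric e -> walk_k e k x y -> walk_k e k y x.
Proof.
move=> hs /walk_kP [p [hsz hp hl]]; apply/walk_kP.
exists (rev (belast x p)); split.
- by rewrite size_rev size_belast.
- rewrite -hl rev_path; apply: sub_path hp => a b /=; by rewrite hs.
- rewrite -hl; case: p {hsz hp hl} => [|a p] //=.
  by rewrite rev_cons last_rcons.
Qed.

Lemma gdist_sym (T : finType) (e : rel T) x y :
  simple_graph e -> graph_connected e -> gdist e x y = gdist e y x.
Proof.
move=> [hs _] hc; apply/eqP; rewrite eqn_leq.
have [w1 l1] := gdist_walk x y hc; have [w2 l2] := gdist_walk y x hc.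
by rewrite !walk_min // walk_sym.
Qed.

Lemma walk_cat (T : finType) (e : rel T) a b x y z :
  walk_k e a x y -> walk_k e b y z -> walk_k e (a + b) x z.
Proof.
move=> /walk_kP [p [hp1 hp2 hp3]] /walk_kP [q [hq1 hq2 hq3]]; apply/walk_kP.
exists (p ++ q); rewrite size_cat cat_path last_cat hp1 hq1 hp2 hp3 hq2 hq3.
by split.
Qed.

Lemma gdist_tri (T : finType) (e : rel T) x y z :
  graph_connected e -> (gdist e x z <= gdist e x y + gdist e y z)%N.
Proof.
move=> hc; have [w1 _] := gdist_walk x y hc; have [w2 _] := gdist_walk y z hc.
have [_ l3] := gdist_walk x z hc.
case: (ltnP (gdist e x y + gdist e y z) #|T|) => h.
  exact: walk_min (walk_cat w1 w2) h.
exact: leq_trans (ltnW l3) h.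
Qed.

Lemma gdist_xx (T : finType) (e : rel T) x : gdist e x x = 0%N.
Proof.
apply/eqP; rewrite -leqn0; apply: walk_min; last by apply/card_gt0P; exists x.
by apply/walk_kP; exists [::].
Qed.

Lemma gdist_eq0 (T : finType) (e : rel T) x y :
  graph_connected e -> gdist e x y = 0%N -> x = y.
Proof.
move=> hc h0; have [w _] := gdist_walk x y hc; move: w; rewrite h0.
by move=> /walk_kP [[|a p] [] //= _ _ ->].
Qed.

Lemma le_diam (T : finType) (e : rel T) u v : (gdist e u v <= diam e)%N.
Proof.
rewrite /diam; apply: leq_trans (leq_bigmax u) => /=.
exact: (@leq_bigmax _ (fun y => gdist e u y) v).
Qed.

Lemma intP (T : finType) (e : rel T) a b :
  ginterval e a b = [set: T] -> forall z, gdist e a b = (gdist e a z + gdist e z b)%N.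
Proof. move=> h z; have : z \in ginterval e a b by rewrite h inE.
by rewrite inE => /eqP. Qed.

Lemma antip_diam (T : finType) (e : rel T) x xh :
  simple_graph e -> graph_connected e -> antipodal e ->
  ginterval e x xh = [set: T] -> gdist e x xh = diam e.
Proof.
move=> hs hc ha hx; apply/eqP; rewrite eqn_leq le_diam /diam.
apply/bigmax_leqP => u _; apply/bigmax_leqP => v _.
have [uh hu] := ha u.
have e1 := intP hu x; have e2 := intP hu xh; have e3 := intP hx u;
have e4 := intP hx uh; have e5 := intP hu v.
rewrite (gdist_sym u x hs hc) in e1.
rewrite (gdist_sym u xh hs hc) in e2 e3.
rewrite (gdist_sym uh xh hs hc) in e4.
lia.
Qed.

Lemma int_sym (T : finType) (e : rel T) a b :
  simple_graph e -> graph_connected e ->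
  ginterval e a b = [set: T] -> ginterval e b a = [set: T].
Proof.
move=> hs hc h; apply/setP => z; rewrite !inE; apply/eqP.
rewrite (gdist_sym b a hs hc) (gdist_sym b z hs hc) (gdist_sym z a hs hc).
by rewrite (intP h z) addnC.
Qed.

Lemma antip_unique (T : finType) (e : rel T) a b c :
  simple_graph e -> graph_connected e -> antipodal e ->
  ginterval e a b = [set: T] -> ginterval e a c = [set: T] -> b = c.
Proof.
move=> hs hc ha hb hcc.
have e1 := antip_diam hs hc ha hb; have e2 := antip_diam hs hc ha hcc.
have e3 := intP hb c.
have e4 := gdist_sym b c hs hc; apply: gdist_eq0 hc _; lia.
Qed.

Lemma antip_rowsum (T : finType) (e : rel T) i :
  simple_graph e -> graph_connected e -> antipodal e ->
  (2 * \sum_(z : T) gdist e i z = #|T| * diam e)%N.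
Proof.
move=> hs hc ha.
have ex : forall x, exists y, ginterval e x y == [set: T].
  by move=> x; have [y hy] := ha x; exists y; rewrite hy.
pose s x := xchoose (ex x).
have hsx : forall x, ginterval e x (s x) = [set: T].
  by move=> x; apply/eqP; exact: (xchooseP (ex x)).
have inv : cancel s s.
  move=> x; apply: (antip_unique hs hc ha (hsx (s x))).
  exact: int_sym (hsx x).
have sinj : injective s := can_inj inv.
rewrite mul2n -addnn {2}(reindex_inj sinj) /= -big_split /=.
transitivity (\sum_(z : T) diam e)%N; last by rewrite sum_nat_const.
apply: eq_bigr => z _.
rewrite (gdist_sym i z hs hc) -(intP (hsx z) i).
exact: antip_diam hs hc ha (hsx z).
Qed.

Lemma minv_le (R : realType) (T : finType) (K : T -> R) z : minv K <= K z.
Proof.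
rewrite /minv; case h: (enum T) => [|a l].
  by move: (mem_enum T z); rewrite h.
by rewrite (bigD1 z) //= ge_min lexx.
Qed.

Lemma minv_const (R : realType) (T : finType) (c : R) (z : T) :
  minv (fun _ : T => c) = c.
Proof.
rewrite /minv; case h: (enum T) => [|a l].
  by move: (mem_enum T z); rewrite h.
by apply: (big_ind (fun v => v = c)) => // u v -> ->; rewrite minxx.
Qed.

Unset Implicit Arguments.
Theorem mainTheorem9 (R : realType) (T : finType) (e : rel T) :
  simple_graph e -> graph_connected e -> (1 < #|T|)%N ->
  (exists K : T -> R, curv_solution e K) ->
  (antipodal e <-> self_centered e /\ bonnet_myers_sharp R e).
Proof.
move=> hs hc hn _.
have [a [b [_ _ hab]]] := card_gt1P hn.
have hL : (0 < diam e)%N.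
  rewrite lt0n; apply/eqP => h0; move/eqP: hab; apply.
  apply: gdist_eq0 hc _; apply/eqP; rewrite -leqn0 -h0 le_diam //.
have hLR : (0:R) < (diam e)%:R by rewrite ltr0n.
have hL0 : (diam e)%:R != 0 :> R by rewrite gt_eqF.
have hn0 : (0:R) < (#|T|)%:R by rewrite ltr0n; lia.
split.
- move=> ha; split.
  + move=> x; have [xh hx] := ha x; exists xh; exact: antip_diam hs hc ha hx.
  + exists (fun _ => 2 / (diam e)%:R); split; last exact: minv_const a.
    split.
    * move=> i; rewrite -mulr_suml -natr_sum.
      have h2 := antip_rowsum i hs hc ha.
      have h3 : ((\sum_z gdist e i z)%:R * 2 = (#|T|)%:R * (diam e)%:R :> R).
        by rewrite -natrM mulnC h2 natrM.
      by rewrite mulrA h3 mulfK.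
    * move=> K' hK'; rewrite (minv_const _ a).
      have [xh hx] := ha a.
      have hsum : \sum_z (diam e)%:R * K' z = (#|T|)%:R + (#|T|)%:R :> R.
        rewrite -{1}(hK' a) -(hK' xh) -big_split /=; apply: eq_bigr => z _.
        rewrite -mulrDl -natrD (gdist_sym xh z hs hc) -(intP hx z).
        by rewrite (antip_diam hs hc ha hx).
      have hle : \sum_(z : T) (diam e)%:R * minv K' <= \sum_z (diam e)%:R * K' z.
        by apply: ler_sum => z _; rewrite ler_wpM2l ?ler0n // minv_le.
      rewrite sumr_const hsum -mulr_natr in hle.
      rewrite ler_pdivlMr //; nra.
- move=> [hsc [K [[hKs _] hm]]] x.
  have [xh hx] := hsc x; exists xh.
  apply/setP => z; rewrite !inE; apply/eqP.
  set L := diam e in hx hm hL hLR hL0 *.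
  set m := 2 / (L%:R : R) in hm *.
  have hm0 : 0 < m by rewrite divr_gt0.
  have hrow : \sum_w (gdist e x w + gdist e w xh)%:R * K w
              = (#|T|)%:R + (#|T|)%:R :> R.
    rewrite -{1}(hKs x) -(hKs xh) -big_split /=; apply: eq_bigr => w _.
    by rewrite natrD mulrDl (gdist_sym w xh hs hc).
  have hge : forall w, (L <= gdist e x w + gdist e w xh)%N.
    by move=> w; rewrite -hx gdist_tri.
  have hpt : forall w, L%:R * m <= (gdist e x w + gdist e w xh)%:R * K w.
    move=> w; apply: (@le_trans _ _ ((gdist e x w + gdist e w xh)%:R * m)).
      by rewrite ler_pM2r // ler_nat hge.
    by rewrite ler_wpM2l ?ler0n // -hm minv_le.
  have hsum : \sum_(w : T) (L%:R * m) = (#|T|)%:R + (#|T|)%:R :> R.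
    rewrite sumr_const (mulrC (L%:R)) /m divfK //.
    by rewrite -mulr_natl; lra.
  have h0 : \sum_w ((gdist e x w + gdist e w xh)%:R * K w - L%:R * m) = 0 :> R.
    by rewrite sumrB hrow hsum subrr.
  have hz : (gdist e x z + gdist e z xh)%:R * K z - L%:R * m = 0.
    by apply: (psumr_eq0P _ h0) => // w _; rewrite subr_ge0 hpt.
  have hle : (gdist e x z + gdist e z xh)%:R * m <= L%:R * m.
    move/eqP: hz; rewrite subr_eq0 => /eqP <-.
    by rewrite ler_wpM2l ?ler0n // -hm minv_le.
  move: hle; rewrite ler_pM2r // ler_nat => hle.
  by rewrite hx; apply/eqP; rewrite eqn_leq hge hle.
Qed.
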